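(* Let $(\kappa,M,p)$ satisfy Assumption (A), $X\in\mathfrak{X}_0$, $(R,r)$ a hypothesis, $T$ the test statistic based on $\hat\Omega_{\kappa,M,p,X}$, and $\mu_0\in\mathfrak{M}_0$. 1. If $M\in\mathbb{M}_{KV}$ and $y\notin N^*(\hat\Omega_{\kappa,M,p,X})$, then $T$ is differentiable at $\mu_0+y$. 2. Suppose $M\notin\mathbb{M}_{KV}$, $\kappa$ is continuously differentiable on the nonempty complement of a closed set $\Delta(\kappa)\subseteq\mathbb{R}$, and $y\notin N^*(\hat\Omega_{\kappa,M,p,X})$. If either (a) $M(y)\neq0$ and $i/M(y)\notin\Delta(\kappa)$ for all $|i|=1,\dots,n-p-1$, or (b) $M(y)=0$ and $\kappa$ has compact support, then $T$ is differentiable at $\mu_0+y$. 3. If $M\notin\mathbb{M}_{KV}$, then for every $\delta\ge0$ there is a multivariate polynomial $g^{(\delta)}_{\kappa,M,p}:\mathbb{R}^n\times\mathbb{R}^{n\times k}\to\mathbb{R}$, not depending on $(R,r)$, such that $\{y\notin N^*(\hat\Omega_{\kappa,M,p,X}):M(y)=\delta\}=\{y\notin N^*(\hat\Omega_{\kappa,M,p,X}):g^{(\delta)}_{\kappa,M,p}(y,X)=0\}$.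
   Context: Let $n>2$, $1\le k<n$, $\mathfrak{X}_0=\{X\in\mathbb{R}^{n\times k}:\operatorname{rank}X=k\}$; $\hat\beta_X(y)=(X'X)^{-1}X'y$, $\hat u_X(y)=y-X\hat\beta_X(y)$. Hypothesis $(R,r)$: $R\in\mathbb{R}^{q\times k}$ of rank $q\ge1$, $r\in\mathbb{R}^q$; $\mathfrak{M}_0=\{X\beta:R\beta=r\}$. Differentiable means Fréchet differentiable as a map $\mathbb{R}^n\to\mathbb{R}$ (existence of the gradient). Estimator $\hat\Omega_{\kappa,M,p,X}$ at $y$: $\hat V=X'\operatorname{diag}(\hat u_X(y))$ with columns $\hat V_{\cdot j}$; $\hat V_p=(\hat V_{\cdot(p+1)},\dots,\hat V_{\cdot n})$; $\hat V_1\in\mathbb{R}^{kp\times(n-p)}$ with $j$-th column $(\hat V_{\cdot(j+p-1)}',\dots,\hat V_{\cdot j}')'$. If $\hat V_1\hat V_1'$ invertible: $\hat A^{(p)}=(\hat A_1,\dots,\hat A_p)=\hat V_p\hat V_1'(\hat V_1\hat V_1')^{-1}$, $\hat Z=\hat V_p-\hat A^{(p)}\hat V_1$; $\check\Gamma_i=(n-p)^{-1}\sum_{j=i+1}^{n-p}\hat Z_{\cdot j}\hat Z_{\cdot(j-i)}'$, $\check\Gamma_{-i}=\check\Gamma_i'$; $\check\Psi=\sum_{|i|\le n-p-1}\kappa(i/M(y))\check\Gamma_i$ (if $M(y)=0$: weight $1$ at $i=0$, else $0$). If $I_k-\sum_l\hat A_l$ invertible with inverse $F$: $\hat\Omega_{\kappa,M,p,X}(y)=nR(X'X)^{-1}F\check\Psi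 F'(X'X)^{-1}R'$; undefined otherwise or if $M(y)$ undefined. $N^*(\hat\Omega)$: set where $\hat\Omega$ is undefined or singular. $T(y)=(R\hat\beta_X(y)-r)'\hat\Omega(y)^{-1}(R\hat\beta_X(y)-r)$ for $y\notin N^*$, else $0$. Bandwidths (undefined if $\hat Z(y)$ undefined or a denominator vanishes; tuning constants independent of $y,X$; weights vector $\omega\in\mathbb{R}^k\setminus\{0\}$, entries $\ge0$). $\mathbb{M}_{AM}$: $\hat\rho_i=\sum_{j=2}^{n-p}\hat Z_{ij}\hat Z_{i(j-1)}/\sum_{j=1}^{n-p-1}\hat Z_{ij}^2$, $\hat\sigma_i^2=(n-p-1)^{-1}\sum_{j=2}^{n-p}(\hat Z_{ij}-\hat\rho_i\hat Z_{i(j-1)})^2$, $\hat\alpha_1=\sum_i\omega_i\frac{4\hat\rho_i^2\hat\sigma_i^4}{(1-\hat\rho_i)^6(1+\hat\rho_i)^2}/\sum_i\omega_i\frac{\hat\sigma_i^4}{(1-\hat\rho_i)^4}$, $\hat\alpha_2=\sum_i\omega_i\frac{4\hat\rho_i^2\hat\sigma_i^4}{(1-\hat\rho_i)^8}/\sum_i\omega_i\frac{\hat\sigma_i^4}{(1-\hat\rho_i)^4}$, $M=c_1(\hat\alpha_jn)^{c_2}$, $c_1,c_2>0$, $j\in\{1,2\}$. $\mathbb{M}_{NW}$: $w(i)\ge0$, $w(0)=1$, $\bar\sigma_i=\omega'\check\Gamma_{|i|}\omega$, $M=\bar c_2([\sum_i|i|^{\bar c_1}w(i)\bar\sigma_i/\sum_iw(i)\bar\sigma_i]^2n)^{\bar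 c_3}$, $\bar c_1\in\mathbb{N}$, $\bar c_2,\bar c_3>0$. $\mathbb{M}_{KV}$: constants $M>0$. Assumption (A): (i) $\kappa$ even, continuous, $\kappa(0)=1$, $\kappa(x)\to0$ as $x\to\infty$, $(\kappa((i-j)/s))_{i,j=1}^J$ positive definite for all $s>0$, $J\in\mathbb{N}$; (ii) $M\in\mathbb{M}_{AM}\cup\mathbb{M}_{NW}\cup\mathbb{M}_{KV}$; (iii) $p\in\mathbb{Z}$, $1\le p\le n/(k+1)$. *)

(* Defs.v *)
From mathcomp Require Import all_boot all_order all_algebra.
From mathcomp Require Import all_classical all_reals all_analysis.
Import GRing.Theory Num.Theory numFieldNormedType.Exports.

Set Implicit Arguments.
Unset Strict Implicit.
Unset Printing Implicit Defensive.

Local Open Scope ring_scope.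
Local Open Scope classical_set_scope.

(* Entry of a matrix addressed by natural-number indices (0-based); 0 when
   out of range (only ever used in range below). *)
Definition mxe (R : ringType) (m N : nat) (A : 'M[R]_(m, N)) (i j : nat) : R :=
  match (insub i : option 'I_m), (insub j : option 'I_N) with
  | Some i', Some j' => A i' j'
  | _, _ => 0
  end.

Section Defs.
End Defs.

Definition beta_hat (R : realType) (n k : nat) (X : 'M[R]_(n, k)) (y : 'cV[R]_n)
  : 'cV[R]_k := invmx (X^T *m X) *m X^T *m y.

Definition u_hat (R : realType) (n k : nat) (X : 'M[R]_(n, k)) (y : 'cV[R]_n)
  : 'cV[R]_n := y - X *m beta_hat X y.

Definition Vhat (R : realType) (n k : nat) (X : 'M[R]_(n, k)) (y : 'cV[R]_n)
  : 'M[R]_(k, n) := \matrix_(a < k, j < n) (X j a * u_hat X y j ord0).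

(* \hat V_p = (\hat V_{.(p+1)}, ..., \hat V_{.n})  (0-based: column j is column j+p) *)
Definition Vp (R : realType) (n k p : nat) (X : 'M[R]_(n, k)) (y : 'cV[R]_n)
  : 'M[R]_(k, n - p) := \matrix_(a < k, j < n - p) mxe (Vhat X y) a (j + p).

(* \hat V_1 : kp x (n-p); (1-based) column j is (V_{j+p-1}', ..., V_j')'.
   0-based: row index r = l*k + a (block l < p, entry a < k) of column j is
   entry a of column j+p-l-1 of \hat V. *)
Definition V1 (R : realType) (n k p : nat) (X : 'M[R]_(n, k)) (y : 'cV[R]_n)
  : 'M[R]_(k * p, n - p) :=
  \matrix_(r < k * p, j < n - p) mxe (Vhat X y) (r %% k) (j + p - r %/ k - 1)%N.

Definition Ahat (R : realType) (n k p : nat) (X : 'M[R]_(n, k)) (y : 'cV[R]_n)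
  : 'M[R]_(k, k * p) :=
  Vp p X y *m (V1 p X y)^T *m invmx (V1 p X y *m (V1 p X y)^T).

Definition Zhat (R : realType) (n k p : nat) (X : 'M[R]_(n, k)) (y : 'cV[R]_n)
  : option 'M[R]_(k, n - p) :=
  if V1 p X y *m (V1 p X y)^T \in unitmx
  then Some (Vp p X y - Ahat p X y *m V1 p X y) else None.

(* \sum_{l=1}^p \hat A_l ; \hat A_l = columns (l-1)k+1 .. lk of \hat A^{(p)} *)
Definition sumA (R : realType) (n k p : nat) (X : 'M[R]_(n, k)) (y : 'cV[R]_n)
  : 'M[R]_k :=
  \matrix_(a < k, b < k) \sum_(l < p) mxe (Ahat p X y) a (l * k + b)%N.

(* \check\Gamma_i, i >= 0, for Z : k x N (here N = n - p):
   N^{-1} \sum_{j=i+1}^{N} Z_{.j} Z_{.(j-i)}'  (1-based), written 0-based. *)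
Definition Gam (R : realType) (k N : nat) (Z : 'M[R]_(k, N)) (i : nat) : 'M[R]_k :=
  (N%:R)^-1 *: \matrix_(a < k, b < k)
     \sum_(i <= j < N) mxe Z a j * mxe Z b (j - i)%N.

Definition GamZ (R : realType) (k N : nat) (Z : 'M[R]_(k, N)) (i : int) : 'M[R]_k :=
  if (0 <= i)%R then Gam Z `|i|%N else (Gam Z `|i|%N)^T.

Definition kweight (R : realType) (kappa : R -> R) (m : R) (i : int) : R :=
  if m == 0 then (if i == 0 then 1 else 0) else kappa (i%:~R / m).

(* \check\Psi = \sum_{|i| <= N-1} w_i \check\Gamma_i ; index i = j - (N-1), j < 2N-1 *)
Definition Psi (R : realType) (k N : nat) (kappa : R -> R) (m : R) (Z : 'M[R]_(k, N))
  : 'M[R]_k :=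
  \sum_(j < (N.*2).-1)
     kweight kappa m (j%:Z - (N.-1)%:Z) *: GamZ Z (j%:Z - (N.-1)%:Z).

(* bandwidth: a (possibly undefined) function of the design X and the data y *)
Definition bandwidth (R : realType) (n k : nat) :=
  'M[R]_(n, k) -> 'cV[R]_n -> option R.

Definition Omega_hat (R : realType) (n k p q : nat) (kappa : R -> R)
  (M : bandwidth R n k) (X : 'M[R]_(n, k)) (Rm : 'M[R]_(q, k)) (y : 'cV[R]_n)
  : option 'M[R]_q :=
  match Zhat p X y, M X y with
  | Some Z, Some m =>
      let G := 1%:M - sumA p X y in
      if G \in unitmx then
        let F := invmx G in
        let XXi := invmx (X^T *m X) in
        Some (n%:R *: (Rm *m XXi *m F *m Psi kappa m Z *m F^T *m XXi *m Rm^T))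
      else None
  | _, _ => None
  end.

Definition Nstar (R : realType) (n k p q : nat) (kappa : R -> R)
  (M : bandwidth R n k) (X : 'M[R]_(n, k)) (Rm : 'M[R]_(q, k)) (y : 'cV[R]_n) : Prop :=
  match Omega_hat p kappa M X Rm y with
  | Some Om => Om \notin unitmx
  | None => True
  end.

Definition Tstat (R : realType) (n k p q : nat) (kappa : R -> R)
  (M : bandwidth R n k) (X : 'M[R]_(n, k)) (Rm : 'M[R]_(q, k)) (r : 'cV[R]_q)
  (y : 'cV[R]_n) : R :=
  match Omega_hat p kappa M X Rm y with
  | Some Om =>
      if Om \in unitmx then
        let d := Rm *m beta_hat X y - r in ((d^T *m invmx Om *m d) ord0 ord0)
      else 0
  | None => 0
  end.

Definition weight_ok (R : realType) (k : nat) (w : 'cV[R]_k) : Prop :=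
  w != 0 /\ forall i, 0 <= w i ord0.

(* Andrews-type (AM) bandwidth; jone = true means \hat\alpha_1, false \hat\alpha_2 *)
Definition bw_AM (R : realType) (n k p : nat) (c1 c2 : R) (jone : bool)
  (w : 'cV[R]_k) (X : 'M[R]_(n, k)) (y : 'cV[R]_n) : option R :=
  match Zhat p X y with
  | None => None
  | Some Z =>
      let N := (n - p)%N in
      let rden i := \sum_(0 <= j < N.-1) mxe Z i j ^+ 2 in
      let rho i := (\sum_(1 <= j < N) mxe Z i j * mxe Z i j.-1) / rden i in
      let s2 i := (N.-1)%:R^-1 *
                  \sum_(1 <= j < N) (mxe Z i j - rho i * mxe Z i j.-1) ^+ 2 in
      let den := \sum_(i < k) w i ord0 * (s2 i ^+ 2 / (1 - rho i) ^+ 4) in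
      let num := if jone then
          \sum_(i < k) w i ord0 * (4 * rho i ^+ 2 * s2 i ^+ 2 /
                                  ((1 - rho i) ^+ 6 * (1 + rho i) ^+ 2))
        else
          \sum_(i < k) w i ord0 * (4 * rho i ^+ 2 * s2 i ^+ 2 / (1 - rho i) ^+ 8) in
      if [forall i : 'I_k, (rden i != 0) && (1 - rho i != 0)
                           && (jone ==> (1 + rho i != 0))] && (den != 0)
      then Some (c1 * powR (num / den * n%:R) c2)
      else None
  end.

Definition bw_NW (R : realType) (n k p : nat) (wt : int -> R) (c1 : nat) (c2 c3 : R)
  (w : 'cV[R]_k) (X : 'M[R]_(n, k)) (y : 'cV[R]_n) : option R :=
  match Zhat p X y with
  | None => None
  | Some Z =>
      let N := (n - p)%N in
      let sb (i : int) := (w^T *m Gam Z `|i|%N *m w) ord0 ord0 in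
      let num := \sum_(j < (N.*2).-1)
          let i := (j%:Z - (N.-1)%:Z)%R in (`|i|%N%:R) ^+ c1 * wt i * sb i in
      let den := \sum_(j < (N.*2).-1)
          let i := (j%:Z - (N.-1)%:Z)%R in wt i * sb i in
      if den != 0 then Some (c2 * powR ((num / den) ^+ 2 * n%:R) c3) else None
  end.

Definition isAM (R : realType) (n k p : nat) (M : bandwidth R n k) : Prop :=
  exists (c1 c2 : R) (jone : bool) (w : 'cV[R]_k),
    [/\ 0 < c1, 0 < c2, weight_ok w & forall X y, M X y = bw_AM p c1 c2 jone w X y].

Definition isNW (R : realType) (n k p : nat) (M : bandwidth R n k) : Prop :=
  exists (wt : int -> R) (c1 : nat) (c2 c3 : R) (w : 'cV[R]_k),
    [/\ (forall i, 0 <= wt i) /\ wt 0 = 1, (0 < c1)%N, 0 < c2 /\ 0 < c3,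
        weight_ok w & forall X y, M X y = bw_NW p wt c1 c2 c3 w X y].

Definition isKV (R : realType) (n k : nat) (M : bandwidth R n k) : Prop :=
  exists c : R, 0 < c /\ forall X y, M X y = Some c.

Definition posdef (R : realType) (J : nat) (A : 'M[R]_J) : Prop :=
  forall v : 'cV[R]_J, v != 0 -> 0 < (v^T *m A *m v) ord0 ord0.

Definition assumptionA (R : realType) (n k p : nat) (kappa : R -> R)
  (M : bandwidth R n k) : Prop :=
  [/\
      (forall x, kappa (- x) = kappa x) /\ continuous kappa /\ kappa 0 = 1 /\
      (kappa x @[x --> +oo] --> 0) /\
      (forall (s : R), 0 < s -> forall J : nat,
          posdef (\matrix_(i < J, j < J) kappa ((i%:R - j%:R) / s))),
      isAM p M \/ isNW p M \/ isKV M &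
      (1 <= p)%N /\ (p * (k + 1) <= n)%N].

Inductive pexpr (R : Type) (V : Type) : Type :=
| PConst of R
| PVar of V
| PAdd of pexpr R V & pexpr R V
| PMul of pexpr R V & pexpr R V.

Fixpoint peval (R : ringType) (V : Type) (env : V -> R) (e : pexpr R V) : R :=
  match e with
  | PConst c => c
  | PVar v => env v
  | PAdd a b => peval env a + peval env b
  | PMul a b => peval env a * peval env b
  end.

Definition yX_env (R : realType) (n k : nat) (y : 'cV[R]_n) (X : 'M[R]_(n, k))
  : 'I_n + ('I_n * 'I_k) -> R :=
  fun v => match v with inl i => y i ord0 | inr (a, b) => X a b end.

(* Main.v *)
Require Import Defs.
From mathcomp Require Import all_boot all_order all_algebra.
From mathcomp Require Import all_classical all_reals all_analysis.
From mathcomp Require Import perm lra zify.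
Import Order.TTheory GRing.Theory Num.Theory numFieldNormedType.Exports.
Local Open Scope ring_scope.
Local Open Scope classical_set_scope.
Set Implicit Arguments.
Unset Strict Implicit.

Record cls (R : realType) (T : Type) := Cls {
  Ev : (T -> Prop) -> Prop;
  CC : (T -> R) -> Prop;
  EvT : Ev (fun _ => True);
  EvI : forall P Q, Ev P -> Ev Q -> Ev (fun t => P t /\ Q t);
  EvS : forall P Q : T -> Prop, (forall t, P t -> Q t) -> Ev P -> Ev Q;
  CCc : forall c, CC (fun _ => c);
  CCD : forall f g, CC f -> CC g -> CC (fun t => f t + g t);
  CCM : forall f g, CC f -> CC g -> CC (fun t => f t * g t);
  CCV : forall f, CC f -> Ev (fun t => f t != 0) -> CC (fun t => (f t)^-1);
  CCE : forall f g, CC f -> Ev (fun t => f t = g t) -> CC g }.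

Section Gen.
Context {R : realType} {T : Type} (K : cls R T).
Local Notation Ev := (Ev K).
Local Notation CC := (CC K).

Lemma Ev_all (P : T -> Prop) : (forall t, P t) -> Ev P.
Proof. by move=> H; apply: (EvS _ (EvT K)). Qed.

Lemma CCext f g : (forall t, f t = g t) -> CC f -> CC g.
Proof. by move=> H Hf; apply: (CCE Hf); apply: Ev_all. Qed.

Lemma CCN f : CC f -> CC (fun t => - f t).
Proof. move=> H; apply: (CCext _ (CCM (CCc K (-1)) H)) => t; by rewrite mulN1r. Qed.

Lemma CCB f g : CC f -> CC g -> CC (fun t => f t - g t).
Proof. by move=> Hf Hg; apply: CCD => //; apply: CCN. Qed.

Lemma CCX f m : CC f -> CC (fun t => f t ^+ m).
Proof.
move=> H; elim: m => [|m IH]; first by apply: (CCext _ (CCc K 1)) => t; rewrite expr0.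
by apply: (CCext _ (CCM H IH)) => t; rewrite exprS.
Qed.

Lemma CCdiv f g : CC f -> CC g -> Ev (fun t => g t != 0) -> CC (fun t => f t / g t).
Proof. by move=> Hf Hg Hn; apply: CCM => //; apply: CCV. Qed.

Lemma CC_sum (I : Type) (r : seq I) (P : pred I) (F : I -> T -> R) :
  (forall i, P i -> CC (F i)) -> CC (fun t => \sum_(i <- r | P i) F i t).
Proof.
move=> H; elim: r => [|a r IH].
  by apply: (CCext _ (CCc K 0)) => t; rewrite big_nil.
case Pa: (P a).
  by apply: (CCext _ (CCD (H a Pa) IH)) => t; rewrite big_cons Pa.
by apply: (CCext _ IH) => t; rewrite big_cons Pa.
Qed.

Lemma CC_prod (I : Type) (r : seq I) (P : pred I) (F : I -> T -> R) :
  (forall i, P i -> CC (F i)) -> CC (fun t => \prod_(i <- r | P i) F i t).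
Proof.
move=> H; elim: r => [|a r IH].
  by apply: (CCext _ (CCc K 1)) => t; rewrite big_nil.
case Pa: (P a).
  by apply: (CCext _ (CCM (H a Pa) IH)) => t; rewrite big_cons Pa.
by apply: (CCext _ IH) => t; rewrite big_cons Pa.
Qed.

Definition CM (a b : nat) (F : T -> 'M[R]_(a, b)) := forall i j, CC (fun t => F t i j).

Lemma CM_ext a b (F G : T -> 'M[R]_(a, b)) : (forall t, F t = G t) -> CM F -> CM G.
Proof. by move=> H HF i j; apply: (CCext _ (HF i j)) => t; rewrite H. Qed.

Lemma CM_cst a b (A : 'M[R]_(a, b)) : CM (fun _ => A).
Proof. by move=> i j; apply: CCc. Qed.

Lemma CM_mx a b (F : 'I_a -> 'I_b -> T -> R) :
  (forall i j, CC (F i j)) -> CM (fun t => \matrix_(i, j) F i j t).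
Proof. by move=> H i j; apply: (CCext _ (H i j)) => t; rewrite mxE. Qed.

Lemma CM_add a b (F G : T -> 'M[R]_(a, b)) : CM F -> CM G -> CM (fun t => F t + G t).
Proof. by move=> HF HG i j; apply: (CCext _ (CCD (HF i j) (HG i j))) => t; rewrite mxE. Qed.

Lemma CM_opp a b (F : T -> 'M[R]_(a, b)) : CM F -> CM (fun t => - F t).
Proof. by move=> HF i j; apply: (CCext _ (CCN (HF i j))) => t; rewrite mxE. Qed.

Lemma CM_sub a b (F G : T -> 'M[R]_(a, b)) : CM F -> CM G -> CM (fun t => F t - G t).
Proof. by move=> HF HG; apply: CM_add => //; apply: CM_opp. Qed.

Lemma CM_scale a b (c : T -> R) (F : T -> 'M[R]_(a, b)) : CC c -> CM F -> CM (fun t => c t *: F t).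
Proof. by move=> Hc HF i j; apply: (CCext _ (CCM Hc (HF i j))) => t; rewrite mxE. Qed.

Lemma CM_tr a b (F : T -> 'M[R]_(a, b)) : CM F -> CM (fun t => (F t)^T).
Proof. by move=> HF i j; apply: (CCext _ (HF j i)) => t; rewrite mxE. Qed.

Lemma CM_mul a b c (F : T -> 'M[R]_(a, b)) (G : T -> 'M[R]_(b, c)) :
  CM F -> CM G -> CM (fun t => F t *m G t).
Proof.
move=> HF HG i j.
have H := @CC_sum _ (index_enum 'I_b) xpredT (fun l t => F t i l * G t l j) (fun l _ => CCM (HF i l) (HG l j)).
by apply: (CCext _ H) => t; rewrite mxE.
Qed.

Lemma CM_sum a b (I : Type) (r : seq I) (P : pred I) (F : I -> T -> 'M[R]_(a, b)) :
  (forall i, P i -> CM (F i)) -> CM (fun t => \sum_(i <- r | P i) F i t).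
Proof.
move=> H i j; apply: (CCext _ (@CC_sum _ r P (fun l t => F l t i j) (fun l Pl => H l Pl i j))).
by move=> t; rewrite summxE.
Qed.

Lemma CC_mxe a b (F : T -> 'M[R]_(a, b)) i j : CM F -> CC (fun t => mxe (F t) i j).
Proof.
rewrite /mxe => HF; case: (insub i : option 'I_a) => [i'|];
  case: (insub j : option 'I_b) => [j'|] //; by apply: CCc.
Qed.

Lemma CC_det m (F : T -> 'M[R]_m) : CM F -> CC (fun t => \det (F t)).
Proof.
move=> HF; apply: (@CC_sum _ _ xpredT (fun (s : {perm 'I_m}) t => (-1) ^+ s * \prod_i F t i (s i))) => s _.
apply: CCM; first exact: CCc.
by apply: CC_prod => i _; apply: HF.
Qed.

Lemma CM_adj m (F : T -> 'M[R]_m) : CM F -> CM (fun t => \adj (F t)).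
Proof.
move=> HF i j; apply: (@CCext (fun t => (-1) ^+ (j + i) * \det (row' j (col' i (F t))))).
  by move=> t; rewrite mxE.
apply: CCM; first exact: CCc.
apply: CC_det => k l; apply: (CCext _ (HF (lift j k) (lift i l))) => t; by rewrite !mxE.
Qed.

Lemma CM_inv m (F : T -> 'M[R]_m) : CM F -> Ev (fun t => F t \in unitmx) ->
  CM (fun t => invmx (F t)).
Proof.
move=> HF HU i j.
apply: (CCE (f := fun t => (\det (F t))^-1 * \adj (F t) i j)).
  apply: CCM; last exact: CM_adj.
  apply: CCV; first exact: CC_det.
  by apply: (EvS _ HU) => t; rewrite unitmxE unitfE.
by apply: (EvS _ HU) => t Hu; rewrite /invmx Hu [RHS]mxE.
Qed.

End Gen.

Section Chain.
Context {R : realType} {T : Type} (K : cls R T).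
Local Notation Ev := (Ev K).
Local Notation CC := (CC K).
Local Notation CM := (CM K).
Context (n k p : nat) (xt : T -> 'M[R]_(n, k)) (yt : T -> 'cV[R]_n).
Hypotheses (Hx : CM xt) (Hy : CM yt) (HXX : Ev (fun t => (xt t)^T *m xt t \in unitmx)).

Lemma CM_beta : CM (fun t => beta_hat (xt t) (yt t)).
Proof.
rewrite /beta_hat; apply: CM_mul => //; apply: CM_mul; last exact: CM_tr.
by apply: CM_inv => //; apply: CM_mul => //; apply: CM_tr.
Qed.

Lemma CM_uhat : CM (fun t => u_hat (xt t) (yt t)).
Proof. by apply: CM_sub => //; apply: CM_mul => //; apply: CM_beta. Qed.

Lemma CM_Vhat : CM (fun t => Vhat (xt t) (yt t)).
Proof.
apply: CM_mx => a j; apply: CCM; first exact: Hx.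
exact: CM_uhat.
Qed.

Lemma CM_Vp : CM (fun t => Vp p (xt t) (yt t)).
Proof. by apply: CM_mx => a j; apply: CC_mxe; apply: CM_Vhat. Qed.

Lemma CM_V1 : CM (fun t => V1 p (xt t) (yt t)).
Proof. by apply: CM_mx => a j; apply: CC_mxe; apply: CM_Vhat. Qed.

Definition V1V1 t := V1 p (xt t) (yt t) *m (V1 p (xt t) (yt t))^T.

Lemma CM_V1V1 : CM V1V1.
Proof. by apply: CM_mul; [apply: CM_V1 | apply: CM_tr; apply: CM_V1]. Qed.

Definition Zs t := Vp p (xt t) (yt t) - Ahat p (xt t) (yt t) *m V1 p (xt t) (yt t).

Hypothesis HV1 : Ev (fun t => V1V1 t \in unitmx).

Lemma CM_Ahat : CM (fun t => Ahat p (xt t) (yt t)).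
Proof.
rewrite /Ahat; apply: CM_mul; last by apply: CM_inv => //; apply: CM_V1V1.
by apply: CM_mul; [apply: CM_Vp | apply: CM_tr; apply: CM_V1].
Qed.

Lemma CM_Zs : CM Zs.
Proof. by apply: CM_sub; [apply: CM_Vp | apply: CM_mul; [apply: CM_Ahat|apply: CM_V1]]. Qed.

Lemma Ev_Zhat : Ev (fun t => Zhat p (xt t) (yt t) = Some (Zs t)).
Proof. by apply: (EvS _ HV1) => t Hu; rewrite /Zhat -/(V1V1 t) Hu. Qed.

Lemma CM_sumA : CM (fun t => sumA p (xt t) (yt t)).
Proof.
apply: CM_mx => a b; apply: (@CC_sum _ _ K _ _ xpredT (fun (l : 'I_p) t => mxe (Ahat p (xt t) (yt t)) a (l * k + b)%N)) => l _.
by apply: CC_mxe; apply: CM_Ahat.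
Qed.

End Chain.

Section Gam.
Context {R : realType} {T : Type} (K : cls R T).
Local Notation Ev := (Ev K).
Local Notation CC := (CC K).
Local Notation CM := (CM K).

Lemma CM_Gam k N (Z : T -> 'M[R]_(k, N)) i : CM Z -> CM (fun t => Gam (Z t) i).
Proof.
move=> HZ; apply: CM_scale; first exact: CCc.
apply: CM_mx => a b.
apply: (@CC_sum _ _ K _ _ (fun _ => true) (fun j t => mxe (Z t) a j * mxe (Z t) b (j - i)%N)) => j _.
by apply: CCM; apply: CC_mxe.
Qed.

Lemma CM_GamZ k N (Z : T -> 'M[R]_(k, N)) i : CM Z -> CM (fun t => GamZ (Z t) i).
Proof.
move=> HZ; case H: (0 <= i)%R.
  by apply: (CM_ext _ (CM_Gam `|i|%N HZ)) => t; rewrite /GamZ H.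
by apply: (CM_ext _ (CM_tr (CM_Gam `|i|%N HZ))) => t; rewrite /GamZ H.
Qed.

Lemma CM_Psi k N kappa (m : T -> R) (Z : T -> 'M[R]_(k, N)) :
  CM Z -> (forall j : 'I_(N.*2).-1, CC (fun t => kweight kappa (m t) (j%:Z - (N.-1)%:Z))) ->
  CM (fun t => Psi kappa (m t) (Z t)).
Proof.
move=> HZ Hw.
have H := @CM_sum _ _ K _ _ _ (index_enum 'I_(N.*2).-1) xpredT (fun (j : 'I_(N.*2).-1) t => kweight kappa (m t) (j%:Z - (N.-1)%:Z) *: GamZ (Z t) (j%:Z - (N.-1)%:Z)) (fun j _ => CM_scale (Hw _) (CM_GamZ _ HZ)).
by apply: CM_ext H => t.
Qed.

End Gam.

Section BW.
Context {R : realType}.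

Definition am_rden k N (Z : 'M[R]_(k, N)) (i : nat) : R :=
  \sum_(0 <= j < N.-1) mxe Z i j ^+ 2.
Definition am_rho k N (Z : 'M[R]_(k, N)) (i : nat) : R :=
  (\sum_(1 <= j < N) mxe Z i j * mxe Z i j.-1) / am_rden Z i.
Definition am_s2 k N (Z : 'M[R]_(k, N)) (i : nat) : R :=
  (N.-1)%:R^-1 * \sum_(1 <= j < N) (mxe Z i j - am_rho Z i * mxe Z i j.-1) ^+ 2.
Definition am_den k N (w : 'cV[R]_k) (Z : 'M[R]_(k, N)) : R :=
  \sum_(i < k) w i ord0 * (am_s2 Z i ^+ 2 / (1 - am_rho Z i) ^+ 4).
Definition am_num k N (jone : bool) (w : 'cV[R]_k) (Z : 'M[R]_(k, N)) : R :=
  if jone then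
    \sum_(i < k) w i ord0 * (4 * am_rho Z i ^+ 2 * am_s2 Z i ^+ 2 /
                            ((1 - am_rho Z i) ^+ 6 * (1 + am_rho Z i) ^+ 2))
  else
    \sum_(i < k) w i ord0 * (4 * am_rho Z i ^+ 2 * am_s2 Z i ^+ 2 / (1 - am_rho Z i) ^+ 8).
Definition am_cond k N (jone : bool) (w : 'cV[R]_k) (Z : 'M[R]_(k, N)) : bool :=
  [forall i : 'I_k, (am_rden Z i != 0) && (1 - am_rho Z i != 0)
                    && (jone ==> (1 + am_rho Z i != 0))] && (am_den w Z != 0).
Definition am_s (n : nat) k N (jone : bool) (w : 'cV[R]_k) (Z : 'M[R]_(k, N)) : R :=
  am_num jone w Z / am_den w Z * n%:R.

Lemma bw_AM_eq n k p c1 c2 jone w (X : 'M[R]_(n, k)) y :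
  bw_AM p c1 c2 jone w X y =
  match Zhat p X y with
  | None => None
  | Some Z => if am_cond jone w Z then Some (c1 * powR (am_s n jone w Z) c2) else None
  end.
Proof. by []. Qed.

Definition nw_sb k N (w : 'cV[R]_k) (Z : 'M[R]_(k, N)) (i : int) : R :=
  (w^T *m Gam Z `|i|%N *m w) ord0 ord0.
Definition nw_num k N (wt : int -> R) (c1 : nat) (w : 'cV[R]_k) (Z : 'M[R]_(k, N)) : R :=
  \sum_(j < (N.*2).-1)
    ((`|(j%:Z - (N.-1)%:Z)%R|%N%:R) ^+ c1 * wt (j%:Z - (N.-1)%:Z)%R * nw_sb w Z (j%:Z - (N.-1)%:Z)%R).
Definition nw_den k N (wt : int -> R) (w : 'cV[R]_k) (Z : 'M[R]_(k, N)) : R :=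
  \sum_(j < (N.*2).-1) (wt (j%:Z - (N.-1)%:Z)%R * nw_sb w Z (j%:Z - (N.-1)%:Z)%R).
Definition nw_s (n : nat) k N wt c1 (w : 'cV[R]_k) (Z : 'M[R]_(k, N)) : R :=
  (nw_num wt c1 w Z / nw_den wt w Z) ^+ 2 * n%:R.

Lemma bw_NW_eq n k p wt c1 c2 c3 w (X : 'M[R]_(n, k)) y :
  bw_NW p wt c1 c2 c3 w X y =
  match Zhat p X y with
  | None => None
  | Some Z => if nw_den wt w Z != 0 then Some (c2 * powR (nw_s n wt c1 w Z) c3) else None
  end.
Proof. by []. Qed.

End BW.

Section BWC.
Context {R : realType} {T : Type} (K : cls R T).
Local Notation Ev := (Ev K).
Local Notation CC := (CC K).
Local Notation CM := (CM K).
Context (k N : nat) (Zt : T -> 'M[R]_(k, N)) (HZ : CM Zt).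

Lemma CC_rden i : CC (fun t => am_rden (Zt t) i).
Proof.
apply: (@CC_sum _ _ K _ _ (fun _ => true) (fun j t => mxe (Zt t) i j ^+ 2)) => j _.
by apply: CCX; apply: CC_mxe.
Qed.

Lemma CC_rho i : Ev (fun t => am_rden (Zt t) i != 0) -> CC (fun t => am_rho (Zt t) i).
Proof.
move=> H; apply: CCdiv => //; last exact: CC_rden.
apply: (@CC_sum _ _ K _ _ (fun _ => true) (fun j t => mxe (Zt t) i j * mxe (Zt t) i j.-1)) => j _.
by apply: CCM; apply: CC_mxe.
Qed.

Lemma CC_s2 i : Ev (fun t => am_rden (Zt t) i != 0) -> CC (fun t => am_s2 (Zt t) i).
Proof.
move=> H; apply: CCM; first exact: CCc.
apply: (@CC_sum _ _ K _ _ (fun _ => true) (fun j t => (mxe (Zt t) i j - am_rho (Zt t) i * mxe (Zt t) i j.-1) ^+ 2)) => j _.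
apply: CCX; apply: CCB; first exact: CC_mxe.
by apply: CCM; [apply: CC_rho | apply: CC_mxe].
Qed.

Lemma CC_am_den w :
  (forall i : 'I_k, Ev (fun t => am_rden (Zt t) i != 0) /\ Ev (fun t => 1 - am_rho (Zt t) i != 0)) ->
  CC (fun t => am_den w (Zt t)).
Proof.
move=> Hi.
apply: (@CC_sum _ _ K _ _ xpredT (fun (i : 'I_k) t => w i ord0 * (am_s2 (Zt t) i ^+ 2 / (1 - am_rho (Zt t) i) ^+ 4))) => i _.
have [H1 H2] := Hi i.
apply: CCM; first exact: CCc.
apply: CCdiv.
- by apply: CCX; exact: CC_s2.
- by apply: CCX; apply: CCB; (exact: CCc || exact: CC_rho).
- by apply: (EvS _ H2) => t A; rewrite expf_neq0.
Qed.

Lemma CC_am_s n jone w : Ev (fun t => am_cond jone w (Zt t)) ->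
  CC (fun t => am_s n jone w (Zt t)).
Proof.
move=> Hc.
have Hi : forall i : 'I_k, [/\ Ev (fun t => am_rden (Zt t) i != 0),
   Ev (fun t => 1 - am_rho (Zt t) i != 0) &
   (jone -> Ev (fun t => 1 + am_rho (Zt t) i != 0))].
  move=> i; split.
  - by apply: (EvS _ Hc) => t /andP[/forallP /(_ i) /andP[/andP[]]].
  - by apply: (EvS _ Hc) => t /andP[/forallP /(_ i) /andP[/andP[]]].
  - by move=> J; apply: (EvS _ Hc) => t /andP[/forallP /(_ i) /andP[_]]; rewrite J.
have Hden : Ev (fun t => am_den w (Zt t) != 0).
  by apply: (EvS _ Hc) => t /andP[].
apply: CCM; last exact: CCc.
apply: CCdiv => //.
  rewrite /am_num; move: Hi Hc; case: jone => Hi Hc.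
    apply: (@CC_sum _ _ K _ _ xpredT (fun (i : 'I_k) t => w i ord0 * (4 * am_rho (Zt t) i ^+ 2 * am_s2 (Zt t) i ^+ 2 /
                            ((1 - am_rho (Zt t) i) ^+ 6 * (1 + am_rho (Zt t) i) ^+ 2)))) => i _.
    have [H1 H2 H3] := Hi i.
    apply: CCM; first exact: CCc.
    apply: CCdiv.
    - by apply: CCM; [apply: CCM; [exact: CCc | apply: CCX; exact: CC_rho] | apply: CCX; exact: CC_s2].
    - by apply: CCM; apply: CCX; [apply: CCB|apply: CCD]; (exact: CCc || exact: CC_rho).
    - apply: (EvS _ (EvI (H3 erefl) H2)) => t [A B].
      by rewrite mulf_neq0 // expf_neq0.
  apply: (@CC_sum _ _ K _ _ xpredT (fun (i : 'I_k) t => w i ord0 * (4 * am_rho (Zt t) i ^+ 2 * am_s2 (Zt t) i ^+ 2 / (1 - am_rho (Zt t) i) ^+ 8))) => i _.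
  have [H1 H2 H3] := Hi i.
  apply: CCM; first exact: CCc.
  apply: CCdiv.
  - by apply: CCM; [apply: CCM; [exact: CCc | apply: CCX; exact: CC_rho] | apply: CCX; exact: CC_s2].
  - by apply: CCX; apply: CCB; (exact: CCc || exact: CC_rho).
  - by apply: (EvS _ H2) => t A; rewrite expf_neq0.
apply: (@CC_sum _ _ K _ _ xpredT (fun (i : 'I_k) t => w i ord0 * (am_s2 (Zt t) i ^+ 2 / (1 - am_rho (Zt t) i) ^+ 4))) => i _.
have [H1 H2 H3] := Hi i.
apply: CCM; first exact: CCc.
apply: CCdiv.
- by apply: CCX; exact: CC_s2.
- by apply: CCX; apply: CCB; (exact: CCc || exact: CC_rho).
- by apply: (EvS _ H2) => t A; rewrite expf_neq0.
Qed.

Lemma CC_sb w i : CC (fun t => nw_sb w (Zt t) i).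
Proof. by apply: CM_mul; [apply: CM_mul; [apply: CM_cst|apply: CM_Gam]|apply: CM_cst]. Qed.

Lemma CC_nw_den wt w : CC (fun t => nw_den wt w (Zt t)).
Proof.
apply: (@CC_sum _ _ K _ _ xpredT (fun (j : 'I_(N.*2).-1) t => wt (j%:Z - (N.-1)%:Z)%R * nw_sb w (Zt t) (j%:Z - (N.-1)%:Z)%R)) => j _.
by apply: CCM; [apply: CCc|apply: CC_sb].
Qed.

Lemma CC_nw_s n wt c1 w : Ev (fun t => nw_den wt w (Zt t) != 0) ->
  CC (fun t => nw_s n wt c1 w (Zt t)).
Proof.
move=> H; apply: CCM; last exact: CCc.
apply: CCX; apply: CCdiv => //; last exact: CC_nw_den.
apply: (@CC_sum _ _ K _ _ xpredT (fun (j : 'I_(N.*2).-1) t => (`|(j%:Z - (N.-1)%:Z)%R|%N%:R) ^+ c1 * wt (j%:Z - (N.-1)%:Z)%R * nw_sb w (Zt t) (j%:Z - (N.-1)%:Z)%R)) => j _.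
by apply: CCM; [apply: CCc|apply: CC_sb].
Qed.

End BWC.

Lemma am_s_ge0 {R : realType} n k N jone (w : 'cV[R]_k) (Z : 'M[R]_(k, N)) :
  (forall i, 0 <= w i ord0) -> am_cond jone w Z -> 0 <= am_s n jone w Z.
Proof.
move=> Hw /andP[_ Hd].
have Hd0 : 0 <= am_den w Z.
  apply: sumr_ge0 => i _; apply: mulr_ge0 => //; apply: divr_ge0; first exact: sqr_ge0.
  by apply: exprn_even_ge0.
apply: mulr_ge0; last exact: ler0n.
apply: divr_ge0 => //.
rewrite /am_num; case: jone.
  apply: sumr_ge0 => i _; apply: mulr_ge0 => //; apply: divr_ge0.
    by apply: mulr_ge0; [apply: mulr_ge0; [lra|apply: sqr_ge0]|apply: sqr_ge0].
  by apply: mulr_ge0; apply: exprn_even_ge0.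
apply: sumr_ge0 => i _; apply: mulr_ge0 => //; apply: divr_ge0.
  by apply: mulr_ge0; [apply: mulr_ge0; [lra|apply: sqr_ge0]|apply: sqr_ge0].
by apply: exprn_even_ge0.
Qed.

Lemma nw_s_ge0 {R : realType} n k N wt c1 (w : 'cV[R]_k) (Z : 'M[R]_(k, N)) :
  0 <= nw_s n wt c1 w Z.
Proof. by apply: mulr_ge0; [apply: sqr_ge0|apply: ler0n]. Qed.

Section DiffInst.
Context {R : realType} {V : normedModType R}.

Lemma diff_zero_near (h : V -> R) x : (\forall t \near x, h t = 0) -> differentiable h x.
Proof.
move=> Hh.
have hx : h x = 0 by apply: nbhs_singleton Hh.
have E : h \o shift x = cst (h x) + \0 +o_ 0 id.
  apply/eqaddoP => e he.
  move/nbhs0P: Hh => Hh.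
  near=> t.
  have -> : (h \o +%R^~ x - (cst (h x) + \0)) t = 0.
    by rewrite !fctE hx addr0 subr0 [t + x]addrC (near Hh t).
  by rewrite normr0 mulr_ge0 // ltW.
have d0 : 'd h x = \0 :> (V -> R).
  by apply: diff_unique => //; exact: cst_continuous.
apply/diff_locallyP; rewrite d0; split => //; exact: cst_continuous.
Unshelve. all: by end_near.
Qed.

Lemma diff_near (f g : V -> R) x : differentiable f x ->
  (\forall t \near x, f t = g t) -> differentiable g x.
Proof.
move=> Hf Hfg.
have -> : g = f + (g - f) by apply/funext => t /=; rewrite addrC subrK.
apply: differentiableD => //; apply: diff_zero_near.
by near=> t; rewrite !fctE (near Hfg t) // subrr.
Unshelve. all: by end_near.
Qed.

End DiffInst.

Section DCls.
Context {R : realType} (n : nat) (z : 'cV[R]_n).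

Definition dcls : cls R 'cV[R]_n.
Proof.
refine (@Cls R 'cV[R]_n (fun P => \forall t \near z, P t) (fun f => differentiable f z)
  _ _ _ _ _ _ _ _).
- exact: filterT.
- by move=> P Q; apply: filterI.
- by move=> P Q H; apply: filterS.
- by move=> c; exact: differentiable_cst.
- by move=> f g Hf Hg; exact: differentiableD.
- by move=> f g Hf Hg; exact: differentiableM.
- by move=> f Hf Hn; apply: differentiableV => //; apply: nbhs_singleton Hn.
- by move=> f g Hf Hfg; apply: diff_near Hf Hfg.
Defined.

Lemma dEv_nz (f : 'cV[R]_n -> R) : differentiable f z -> f z != 0 ->
  \forall t \near z, f t != 0.
Proof.
move=> /differentiable_continuous Hc Hn.
exact: (cvgr_neq0 _ Hc Hn).
Qed.

Lemma dEv_unit m (F : 'cV[R]_n -> 'M[R]_m) : CM dcls F -> F z \in unitmx ->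
  \forall t \near z, F t \in unitmx.
Proof.
move=> HF Hu; have Hd := CC_det HF.
have : \forall t \near z, \det (F t) != 0.
  by apply: dEv_nz => //; rewrite -unitfE -unitmxE.
by apply: filterS => t; rewrite unitmxE unitfE.
Qed.

Lemma dCM_id : CM dcls (fun y : 'cV[R]_n => y).
Proof. by move=> i j; exact: differentiable_coord. Qed.

End DCls.

Section RCls.
Context {R : realType} (n k : nat).
Local Notation V := ('I_n + ('I_n * 'I_k))%type.
Local Notation T := ('cV[R]_n * 'M[R]_(n, k))%type.
Definition renv (t : T) := yX_env t.1 t.2.
Context (D : T -> Prop).

Definition rCC (f : T -> R) := exists a b : pexpr R V, forall t, D t ->
  peval (renv t) b != 0 /\ f t = peval (renv t) a / peval (renv t) b.

Definition rcls : cls R T.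
Proof.
refine (@Cls R T (fun P => forall t, D t -> P t) rCC _ _ _ _ _ _ _ _).
- by [].
- by move=> P Q HP HQ t Dt; split; [apply: HP|apply: HQ].
- by move=> P Q H HP t Dt; apply: H; apply: HP.
- by move=> c; exists (@PConst R V c), (@PConst R V 1) => t _ /=; rewrite oner_neq0 divr1.
- move=> f g [a1 [b1 H1]] [a2 [b2 H2]].
  exists (PAdd (PMul a1 b2) (PMul a2 b1)), (PMul b1 b2) => t Dt /=.
  have [n1 e1] := H1 t Dt; have [n2 e2] := H2 t Dt.
  by rewrite mulf_neq0 // e1 e2 addf_div.
- move=> f g [a1 [b1 H1]] [a2 [b2 H2]].
  exists (PMul a1 a2), (PMul b1 b2) => t Dt /=.
  have [n1 e1] := H1 t Dt; have [n2 e2] := H2 t Dt.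
  by rewrite mulf_neq0 // e1 e2 mulf_div.
- move=> f [a [b H]] Hn; exists b, a => t Dt.
  have [n1 e1] := H t Dt; have := Hn t Dt; rewrite e1 => Hab.
  split; last by rewrite invf_div.
  by apply: contraNneq Hab => ->; rewrite mul0r.
- move=> f g [a [b H]] E; exists a, b => t Dt.
  by rewrite -(E t Dt); apply: H.
Defined.

Lemma rCM_y : CM rcls (fun t : T => t.1).
Proof.
move=> i j; exists (@PVar R V (inl i)), (@PConst R V 1) => t _ /=.
by rewrite oner_neq0 divr1 /renv /= (ord1 j).
Qed.

Lemma rCM_X : CM rcls (fun t : T => t.2).
Proof.
by move=> i j; exists (@PVar R V (inr (i, j))), (@PConst R V 1) => t _ /=; rewrite oner_neq0 divr1.
Qed.

End RCls.

Section Shift.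
Context {R : realType}.

Lemma XtX_unit n k (X : 'M[R]_(n, k)) : \rank X = k -> X^T *m X \in unitmx.
Proof.
move=> HX; rewrite -row_free_unit; apply/inj_row_free => v Hv.
set u := v *m X^T.
have Hu : u *m u^T = 0 by rewrite /u trmx_mul trmxK mulmxA -(mulmxA v) Hv mul0mx.
have Eu : u = v *m X^T by [].
clearbody u.
have u0 : u = 0.
  apply/matrixP => i j; rewrite (ord1 i) [RHS]mxE.
  have := congr1 (fun M : 'M[R]_1 => M ord0 ord0) Hu; rewrite [LHS]mxE [RHS]mxE => /eqP.
  under eq_bigr => l _ do rewrite [u^T _ _]mxE -expr2.
  rewrite psumr_eq0; last by move=> l _; rewrite sqr_ge0.
  by move=> /allP /(_ j (mem_index_enum _)); rewrite sqrf_eq0 => /eqP.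
rewrite Eu in u0.
have rf : row_free X^T by rewrite /row_free mxrank_tr HX.
by apply: (row_free_inj rf); rewrite mul0mx.
Qed.

Lemma uhat_shift n k (X : 'M[R]_(n, k)) (beta : 'cV[R]_k) y :
  X^T *m X \in unitmx -> u_hat X (X *m beta + y) = u_hat X y.
Proof.
move=> Hu; rewrite /u_hat /beta_hat !mulmxDr.
have -> : invmx (X^T *m X) *m X^T *m (X *m beta) = beta.
  by rewrite -mulmxA (mulmxA X^T) mulmxA mulVmx // mul1mx.
by rewrite opprD addrACA subrr add0r.
Qed.

Lemma Zhat_shift n k p (X : 'M[R]_(n, k)) (beta : 'cV[R]_k) y :
  X^T *m X \in unitmx -> Zhat p X (X *m beta + y) = Zhat p X y.
Proof.
move=> Hu; have E : Vhat X (X *m beta + y) = Vhat X y.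
  by apply/matrixP => a j; rewrite [LHS]mxE [RHS]mxE (uhat_shift beta y Hu).
by rewrite /Zhat /Ahat /V1 /Vp E.
Qed.

Lemma sumA_shift n k p (X : 'M[R]_(n, k)) (beta : 'cV[R]_k) y :
  X^T *m X \in unitmx -> sumA p X (X *m beta + y) = sumA p X y.
Proof.
move=> Hu; have E : Vhat X (X *m beta + y) = Vhat X y.
  by apply/matrixP => a j; rewrite [LHS]mxE [RHS]mxE (uhat_shift beta y Hu).
by rewrite /sumA /Ahat /V1 /Vp E.
Qed.

Lemma M_shift n k p kappa (M : bandwidth R n k) (X : 'M[R]_(n, k)) beta y :
  assumptionA p kappa M -> X^T *m X \in unitmx -> M X (X *m beta + y) = M X y.
Proof.
move=> [_ HM _] Hu; case: HM => [[c1 [c2 [jone [w [_ _ _ E]]]]]|[[wt [c1 [c2 [c3 [w [_ _ _ _ E]]]]]]|[c [_ E]]]].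
- by rewrite !E !bw_AM_eq (Zhat_shift p beta y Hu).
- by rewrite !E !bw_NW_eq (Zhat_shift p beta y Hu).
- by rewrite !E.
Qed.

Lemma Omega_shift n k p q kappa (M : bandwidth R n k) (X : 'M[R]_(n, k)) (Rm : 'M[R]_(q, k)) beta y :
  assumptionA p kappa M -> X^T *m X \in unitmx ->
  Omega_hat p kappa M X Rm (X *m beta + y) = Omega_hat p kappa M X Rm y.
Proof.
by move=> HA Hu; rewrite /Omega_hat (Zhat_shift p beta y Hu) (M_shift beta y HA Hu) (sumA_shift p beta y Hu).
Qed.

Lemma Nstar_shift n k p q kappa (M : bandwidth R n k) (X : 'M[R]_(n, k)) (Rm : 'M[R]_(q, k)) beta y :
  assumptionA p kappa M -> X^T *m X \in unitmx ->
  Nstar p kappa M X Rm (X *m beta + y) <-> Nstar p kappa M X Rm y.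
Proof. by move=> HA Hu; rewrite /Nstar (Omega_shift Rm beta y HA Hu). Qed.

Lemma powR_solve (c c' s d : R) : 0 < c -> 0 < c' -> 0 <= s -> 0 <= d ->
  (c * powR s c' = d <-> s = powR (d / c) c'^-1).
Proof.
move=> c0 c'0 s0 d0; split.
  move=> <-; rewrite (mulrC c) mulfK ?gt_eqF // -powRrM mulfV ?gt_eqF // powRr1 //.
move=> ->; rewrite -powRrM mulVf ?gt_eqF // powRr1; last by apply: divr_ge0 => //; apply: ltW.
by rewrite mulrC divfK ?gt_eqF.
Qed.

End Shift.

Lemma Omega_some {R : realType} n k p q kappa (M : bandwidth R n k) (X : 'M[R]_(n, k))
  (Rm : 'M[R]_(q, k)) y :
  ~ Nstar p kappa M X Rm y ->
  exists Z m Om, [/\ Zhat p X y = Some Z, M X y = Some m,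
     1%:M - sumA p X y \in unitmx,
     Omega_hat p kappa M X Rm y = Some Om & Om \in unitmx].
Proof.
rewrite /Nstar /Omega_hat.
case EZ: (Zhat p X y) => [Z|] //; case EM: (M X y) => [m|] //.
case: ifP => HG //; set Om := (n%:R *: _) => HO.
by exists Z, m, Om; split => //; apply/negPn/negP.
Qed.

Lemma Zhat_unit {R : realType} n k p (X : 'M[R]_(n, k)) y Z :
  Zhat p X y = Some Z -> V1 p X y *m (V1 p X y)^T \in unitmx.
Proof. by rewrite /Zhat; case: ifP. Qed.

Lemma part3 (R : realType) (n k p : nat) (kappa : R -> R) (M : bandwidth R n k)
  (HA : assumptionA p kappa M) (nKV : ~ isKV M) (delta : R) (Hd : 0 <= delta) :
     exists g : pexpr R ('I_n + ('I_n * 'I_k)),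
       forall X' : 'M[R]_(n, k), \rank X' = k ->
       forall (q' : nat) (R' : 'M[R]_(q', k)), (1 <= q')%N -> \rank R' = q' ->
       forall y : 'cV[R]_n,
         (~ Nstar p kappa M X' R' y /\ M X' y = Some delta) <->
         (~ Nstar p kappa M X' R' y /\ peval (yX_env y X') g = 0).
Proof.
pose D (t : 'cV[R]_n * 'M[R]_(n, k)) :=
  [/\ \rank t.2 = k, Zhat p t.2 t.1 <> None & M t.2 t.1 <> None].
pose K := rcls D.
have Hx : CM K (fun t => t.2) := rCM_X D.
have Hy : CM K (fun t => t.1) := rCM_y D.
have HXX : Ev K (fun t => (t.2)^T *m t.2 \in unitmx).
  by move=> t [Hr _ _]; apply: XtX_unit.
have HV1 : Ev K (fun t => V1V1 p (fun t => t.2) (fun t => t.1) t \in unitmx).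
  move=> t [_ HZ _]; rewrite /V1V1; move: HZ.
  by case E: (Zhat p t.2 t.1) => [Z|] // _; apply: (Zhat_unit E).
have HZs := CM_Zs Hx Hy HXX HV1.
have EZ : forall t, D t -> Zhat p t.2 t.1 = Some (Zs p (fun t => t.2) (fun t => t.1) t).
  exact: (Ev_Zhat (K := K) HV1).
have [c [c' [s [c0 c'0 Hs HsM]]]] : exists c c' (s : 'cV[R]_n * 'M[R]_(n, k) -> R),
  [/\ 0 < c, 0 < c', CC K s &
     forall t, D t -> M t.2 t.1 = Some (c * powR (s t) c') /\ 0 <= s t].
  case: HA => _ HM _.
  case: HM => [[c1 [c2 [jone [w [c10 c20 [_ Hw] E]]]]]|[[wt [c1 [c2 [c3 [w [_ _ [c20 c30] _ E]]]]]]|//]].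
    have Hc : Ev K (fun t => am_cond jone w (Zs p (fun t => t.2) (fun t => t.1) t)).
      move=> t Dt; have := EZ t Dt; case: Dt => _ _; rewrite E bw_AM_eq => HM0 HZ0.
      by move: HM0; rewrite HZ0; case: ifP.
    exists c1, c2, (fun t => am_s n jone w (Zs p (fun t => t.2) (fun t => t.1) t)); split => //.
      exact: CC_am_s.
    move=> t Dt; rewrite E bw_AM_eq (EZ t Dt) (Hc t Dt); split => //.
    by apply: am_s_ge0 => //; apply: Hc.
  have Hc : Ev K (fun t => nw_den wt w (Zs p (fun t => t.2) (fun t => t.1) t) != 0).
    move=> t Dt; have := EZ t Dt; case: Dt => _ _; rewrite E bw_NW_eq => HM0 HZ0.
    by move: HM0; rewrite HZ0; case: ifP.
  exists c2, c3, (fun t => nw_s n wt c1 w (Zs p (fun t => t.2) (fun t => t.1) t)); split => //.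
    exact: CC_nw_s.
  move=> t Dt; rewrite E bw_NW_eq (EZ t Dt) (Hc t Dt); split => //.
  exact: nw_s_ge0.
pose th := powR (delta / c) c'^-1.
have [a [b Hab]] : CC K (fun t => s t - th) by apply: CCB => //; apply: CCc.
exists a => X' HX' q' R' _ _ y.
have Dt : forall (HN : ~ Nstar p kappa M X' R' y), D (y, X').
  move=> HN; have [Z [m [Om [EZ' EM _ _ _]]]] := Omega_some HN.
  by split => //=; rewrite ?EZ' ?EM.
split => -[HN H]; split => //; have := Dt HN => Dyx;
  have [Hb Heq] := Hab _ Dyx; have [HM0 Hs0] := HsM _ Dyx; move: HM0 => /= HM0.
  move: H; rewrite HM0 => -[] /(powR_solve c0 c'0 Hs0 Hd) Hst.
  move: Heq; rewrite /= Hst subrr => /esym /eqP; rewrite mulf_eq0 invr_eq0 (negbTE Hb) orbF.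
  by move/eqP.
rewrite HM0; congr Some; apply/(powR_solve c0 c'0 Hs0 Hd).
by apply/eqP; rewrite -subr_eq0 -/th [_ - _]Heq /renv /= H mul0r.
Qed.

Lemma T_diff (R : realType) (n k p q : nat) (kappa : R -> R) (M : bandwidth R n k)
  (X : 'M[R]_(n, k)) (Rm : 'M[R]_(q, k)) (r : 'cV[R]_q) (z : 'cV[R]_n)
  (HX : \rank X = k) (HN : ~ Nstar p kappa M X Rm z) (ms : 'cV[R]_n -> R)
  (HMs : \forall t \near z, M X t = Some (ms t))
  (Hw : forall j : 'I_((n - p).*2).-1,
     differentiable (fun t => kweight kappa (ms t) (j%:Z - ((n - p).-1)%:Z)) z) :
  differentiable (Tstat p kappa M X Rm r) z.
Proof.
pose K := dcls z.
have Hx : CM K (fun _ => X) := CM_cst K X.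
have Hy : CM K (fun t => t) := dCM_id z.
have HXX : Ev K (fun t => ((fun _ => X) t)^T *m (fun _ => X) t \in unitmx).
  by apply: Ev_all => t; apply: XtX_unit.
have [Z0 [m0 [Om [EZ0 EM0 HG0 EO0 HOm]]]] := Omega_some HN.
have HV1 : Ev K (fun t => V1V1 p (fun _ => X) (fun t => t) t \in unitmx).
  by apply: (dEv_unit (CM_V1V1 Hx Hy HXX)); apply: (Zhat_unit EZ0).
have HZs := CM_Zs Hx Hy HXX HV1.
have EZ : \forall t \near z, Zhat p X t = Some (Zs p (fun _ => X) (fun t => t) t).
  exact: (Ev_Zhat (K := K) HV1).
have HGc : CM K (fun t => 1%:M - sumA p X t).
  by apply: CM_sub; [apply: CM_cst | apply: (CM_sumA Hx Hy HXX HV1)].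
have HGe : \forall t \near z, 1%:M - sumA p X t \in unitmx.
  exact: (dEv_unit HGc HG0).
have HF : CM K (fun t => invmx (1%:M - sumA p X t)) by apply: CM_inv.
pose Omf t := n%:R *: (Rm *m invmx (X^T *m X) *m invmx (1%:M - sumA p X t)
   *m Psi kappa (ms t) (Zs p (fun _ => X) (fun t => t) t)
   *m (invmx (1%:M - sumA p X t))^T *m invmx (X^T *m X) *m Rm^T).
have HOf : CM K Omf.
  apply: CM_scale; first exact: CCc.
  apply: CM_mul; last exact: CM_cst.
  apply: CM_mul; last exact: CM_cst.
  apply: CM_mul; last exact: CM_tr.
  apply: CM_mul; last exact: CM_Psi.
  by apply: CM_mul => //; apply: CM_cst.
have EvO : \forall t \near z, Omega_hat p kappa M X Rm t = Some (Omf t).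
  near=> t; rewrite /Omega_hat (near EZ t) // (near HMs t) // (near HGe t) //.
have OmE : Omf z = Om.
  by have := nbhs_singleton EvO; rewrite EO0 => -[].
have HOu : \forall t \near z, Omf t \in unitmx by apply: dEv_unit => //; rewrite OmE.
pose d t := Rm *m beta_hat X t - r.
have Hd : CM K d.
  by apply: CM_sub; [apply: CM_mul; [apply: CM_cst | apply: CM_beta] | apply: CM_cst].
have HT : CC K (fun t => ((d t)^T *m invmx (Omf t) *m d t) ord0 ord0).
  apply: CM_mul => //; apply: CM_mul; [exact: CM_tr | exact: CM_inv].
apply: (CCE HT) => /=.
near=> t; rewrite /Tstat (near EvO t) // (near HOu t) //.
Unshelve. all: by end_near.
Qed.

Lemma bw_near_diff (R : realType) (n k p q : nat) (kappa : R -> R) (M : bandwidth R n k)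
  (HA : assumptionA p kappa M) (nKV : ~ isKV M)
  (X : 'M[R]_(n, k)) (Rm : 'M[R]_(q, k)) (z : 'cV[R]_n)
  (HX : \rank X = k) (HN : ~ Nstar p kappa M X Rm z) :
  exists c c' (s : 'cV[R]_n -> R), [/\ 0 < c, 0 < c', differentiable s z &
    \forall t \near z, M X t = Some (c * powR (s t) c') /\ 0 <= s t].
Proof.
pose K := dcls z.
have Hx : CM K (fun _ => X) := CM_cst K X.
have Hy : CM K (fun t => t) := dCM_id z.
have HXX : Ev K (fun t => ((fun _ => X) t)^T *m (fun _ => X) t \in unitmx).
  by apply: Ev_all => t; apply: XtX_unit.
have [Z0 [m0 [Om [EZ0 EM0 HG0 EO0 HOm]]]] := Omega_some HN.
have HV1 : Ev K (fun t => V1V1 p (fun _ => X) (fun t => t) t \in unitmx).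
  by apply: (dEv_unit (CM_V1V1 Hx Hy HXX)); apply: (Zhat_unit EZ0).
have HZs := CM_Zs Hx Hy HXX HV1.
have EZ : \forall t \near z, Zhat p X t = Some (Zs p (fun _ => X) (fun t => t) t).
  exact: (Ev_Zhat (K := K) HV1).
have ZE : Zs p (fun _ => X) (fun t => t) z = Z0.
  by have := nbhs_singleton EZ; rewrite EZ0 => -[].
case: HA => _ HM _.
case: HM => [[c1 [c2 [jone [w [c10 c20 [_ Hw] E]]]]]|[[wt [c1 [c2 [c3 [w [_ _ [c20 c30] _ E]]]]]]|//]].
  have Hcz : am_cond jone w Z0.
    by move: EM0; rewrite E bw_AM_eq EZ0; case: ifP.
  move: (Hcz) => /andP[/forallP Hi Hdz].
  have Hr : forall i : 'I_k, \forall t \near z, am_rden (Zs p (fun _ => X) (fun t => t) t) i != 0.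
    move=> i; apply: dEv_nz; first exact: (CC_rden HZs i).
    by rewrite ZE; have /andP[/andP[]] := Hi i.
  have Hr1 : forall i : 'I_k, \forall t \near z, 1 - am_rho (Zs p (fun _ => X) (fun t => t) t) i != 0.
    move=> i; apply: dEv_nz; first exact: (CCB (CCc K 1) (CC_rho HZs (Hr i))).
    by rewrite ZE; have /andP[/andP[]] := Hi i.
  have Hr2 : forall i : 'I_k, \forall t \near z, jone ==> (1 + am_rho (Zs p (fun _ => X) (fun t => t) t) i != 0).
    move=> i; case: (boolP jone) => J; last by apply: filterE.
    apply: filterS (dEv_nz (CCD (CCc K 1) (CC_rho HZs (Hr i))) _) => [t -> //|].
    by rewrite ZE; have /andP[_] := Hi i; rewrite J.
  have Hden : \forall t \near z, am_den w (Zs p (fun _ => X) (fun t => t) t) != 0.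
    apply: dEv_nz; first by apply: (CC_am_den (K := K) HZs) => // i; split; [apply: Hr | apply: Hr1].
    by rewrite ZE.
  have Hc : \forall t \near z, am_cond jone w (Zs p (fun _ => X) (fun t => t) t).
    have HA' : \forall t \near z, forall i : 'I_k,
      [/\ am_rden (Zs p (fun _ => X) (fun t => t) t) i != 0,
          1 - am_rho (Zs p (fun _ => X) (fun t => t) t) i != 0 &
          jone ==> (1 + am_rho (Zs p (fun _ => X) (fun t => t) t) i != 0)].
      apply: (filter_forall (nbhs_filter z)) => i; near=> t.
      by split; [exact: (near (Hr i) t) | exact: (near (Hr1 i) t) | exact: (near (Hr2 i) t)].
    have HA2 : \forall t \near z, [forall i : 'I_k,
      (am_rden (Zs p (fun _ => X) (fun t => t) t) i != 0) &&
      (1 - am_rho (Zs p (fun _ => X) (fun t => t) t) i != 0) &&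
      (jone ==> (1 + am_rho (Zs p (fun _ => X) (fun t => t) t) i != 0))].
      apply: filterS HA' => t Ht; apply/forallP => i; have [A B C] := Ht i.
      by rewrite A B C.
    near=> t; apply/andP; split; [exact: (near HA2 t) | exact: (near Hden t)].
  exists c1, c2, (fun t => am_s n jone w (Zs p (fun _ => X) (fun t => t) t)); split => //.
    exact: (CC_am_s HZs n Hc).
  near=> t; rewrite E bw_AM_eq (near EZ t) // (near Hc t) //; split => //.
  by apply: am_s_ge0 => //; apply: (near Hc t).
have Hdz : nw_den wt w Z0 != 0.
  by move: EM0; rewrite E bw_NW_eq EZ0; case: ifP.
have Hden : \forall t \near z, nw_den wt w (Zs p (fun _ => X) (fun t => t) t) != 0.
  by apply: dEv_nz; [exact: (CC_nw_den HZs) | rewrite ZE].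
exists c2, c3, (fun t => nw_s n wt c1 w (Zs p (fun _ => X) (fun t => t) t)); split => //.
  exact: (CC_nw_s HZs n c1 Hden).
near=> t; rewrite E bw_NW_eq (near EZ t) // (near Hden t) //; split => //.
exact: nw_s_ge0.
Unshelve. all: by end_near.
Qed.

Lemma int_range (R : realType) (Nn j : nat) (i : int) : (j < (Nn.*2).-1)%N ->
  i = (j%:Z - (Nn.-1)%:Z)%R -> i != 0 ->
  exists a : nat, (1 <= a <= Nn.-1)%N /\ (i%:~R = a%:R :> R \/ i%:~R = - a%:R :> R).
Proof.
move=> Hj; case: i => a Ei inz.
  by exists a; split; [apply/andP; split; lia | left].
exists a.+1; split; first by apply/andP; split; lia.
by right; rewrite NegzE mulrNz.
Qed.

Lemma wt_diff_a (R : realType) (n : nat) (kappa : R -> R) (Delta : set R)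
  (Hk : forall x, ~ Delta x -> derivable kappa x 1 /\ {for x, continuous kappa^`()})
  (c c' : R) (s : 'cV[R]_n -> R) (z : 'cV[R]_n) (c0 : 0 < c) (c'0 : 0 < c')
  (Hs : differentiable s z) (Hs0 : 0 < s z) (Nn : nat)
  (HD : forall i : nat, (1 <= i <= Nn.-1)%N ->
     ~ Delta (i%:R / (c * powR (s z) c')) /\ ~ Delta (- (i%:R / (c * powR (s z) c')))) :
  forall j : 'I_(Nn.*2).-1,
    differentiable (fun t => kweight kappa (c * powR (s t) c') (j%:Z - (Nn.-1)%:Z)) z.
Proof.
move=> j.
pose ms t := c * powR (s t) c'.
have Hpow : differentiable (fun x : R => powR x c') (s z).
  by apply/derivable1_diffP; apply: derivable_powR; rewrite in_itv /= Hs0.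
have Hms : differentiable ms z.
  apply: differentiableM; first exact: differentiable_cst.
  exact: (differentiable_comp Hs Hpow).
have Hmz : ms z != 0 by rewrite /ms mulf_neq0 ?gt_eqF ?powR_gt0.
have Hnear : \forall t \near z, ms t != 0 by apply: dEv_nz.
have Hj := ltn_ord j.
set i := (j%:Z - (Nn.-1)%:Z)%R.
have [i0|inz] := eqVneq i 0.
  apply: (diff_near (differentiable_cst (kappa 0) z)).
  near=> t; have Ht : ms t != 0 by exact: (near Hnear t).
  by rewrite /kweight i0 (negbTE Ht) mul0r.
have Hgi : differentiable (fun t => i%:~R / ms t) z.
  apply: differentiableM; first exact: differentiable_cst.
  exact: differentiableV.
have Hki : ~ Delta (i%:~R / ms z).
  have [a [Ha [->|->]]] := int_range R Hj (erefl i) inz.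
    by case: (HD a Ha).
  by rewrite mulNr; case: (HD a Ha).
have Hkd : differentiable kappa (i%:~R / ms z) by apply/derivable1_diffP; case: (Hk _ Hki).
apply: (diff_near (differentiable_comp Hgi Hkd)).
near=> t; have Ht : ms t != 0 by exact: (near Hnear t).
by rewrite /kweight (negbTE Ht).
Unshelve. all: by end_near.
Qed.

Lemma supp_bound (R : realType) (kappa : R -> R) :
  compact (closure [set x | kappa x != 0]) ->
  exists B : R, 0 < B /\ forall x, kappa x != 0 -> `|x| < B.
Proof.
move=> /compact_bounded [B [_ HB]].
exists (`|B| + 2); split; first by apply: ltr_wpDl => //.
move=> x Hx.
have := HB (`|B| + 1); rewrite /globally /= => H.
have Hb : B < `|B| + 1 by apply: (le_lt_trans (ler_norm B)); rewrite ltrDl.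
have := H Hb x (@subset_closure _ [set x | kappa x != 0] x Hx) => Hx1.
by apply: (le_lt_trans Hx1); rewrite ltrD2l ltr1n.
Qed.

Lemma wt_diff_b (R : realType) (n : nat) (kappa : R -> R) (Hk0 : kappa 0 = 1)
  (B : R) (B0 : 0 < B) (HB : forall x, kappa x != 0 -> `|x| < B)
  (c c' : R) (s : 'cV[R]_n -> R) (z : 'cV[R]_n) (c0 : 0 < c) (c'0 : 0 < c')
  (Hs : differentiable s z) (Hsz : s z = 0) (Hsn : \forall t \near z, 0 <= s t) :
  forall i : int, differentiable (fun t => kweight kappa (c * powR (s t) c') i) z.
Proof.
move=> i.
pose eps := B^-1.
have eps0 : 0 < eps by rewrite invr_gt0.
pose th := powR (eps / 2 / c) c'^-1.
have th0 : 0 < th by apply: powR_gt0; apply: divr_gt0 => //; apply: divr_gt0.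
have Eth : c * powR th c' = eps / 2.
  apply/(powR_solve c0 c'0 (powR_ge0 _ _)); first by apply: ltW; apply: divr_gt0.
  by [].
have Hlt : \forall t \near z, s t < th.
  have Hc : s x @[x --> z] --> s z by exact: differentiable_continuous.
  by apply: (cvgr_lt (s z) Hc); rewrite Hsz.
have Hsmall : \forall t \near z, 0 <= c * powR (s t) c' < eps.
  near=> t; apply/andP; split; first by apply: mulr_ge0; [apply: ltW|apply: powR_ge0].
  have h1 : powR (s t) c' <= powR th c'.
    apply: (ge0_ler_powR (ltW c'0)); rewrite ?nnegrE.
    - exact: (near Hsn t).
    - exact: ltW.
    - by apply: ltW; exact: (near Hlt t).
  apply: (le_lt_trans (y := eps / 2)); first by rewrite -Eth ler_pM2l.
  by rewrite ltr_pdivrMr // ltr_pMr // ltr1n.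
have [i0|inz] := eqVneq i 0.
  apply: (diff_near (differentiable_cst (1 : R) z)).
  near=> t; rewrite /kweight i0 eqxx mul0r Hk0; by case: ifP.
apply: (diff_near (differentiable_cst (0 : R) z)).
near=> t.
have /andP[m0 m1] : 0 <= c * powR (s t) c' < eps by exact: (near Hsmall t).
rewrite /kweight /= (negbTE inz); case: ifP => [//|/negbT mn0].
have mp : 0 < c * powR (s t) c' by rewrite lt_def mn0.
apply/esym/eqP; apply: contraT => Hk; have := HB _ Hk.
rewrite normrM normfV (gtr0_norm mp) ltr_pdivrMr // => HH.
have H1 : 1 <= `|i%:~R : R| by apply: norm_intr_ge1; [apply: intr_int | rewrite intr_eq0].
have : B * (c * powR (s t) c') < 1.
  by rewrite -(mulfV (lt0r_neq0 B0)) ltr_pM2l.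
by move=> H2; have := lt_le_trans (le_lt_trans H1 HH) (ltW H2); rewrite ltxx.
Unshelve. all: by end_near.
Qed.

Theorem lemmaB2 (R : realType) (n k p : nat) (kappa : R -> R) (M : bandwidth R n k)
  (Hn : (2 < n)%N) (Hk : (1 <= k)%N /\ (k < n)%N)
  (HA : assumptionA p kappa M)
  (X : 'M[R]_(n, k)) (HX : \rank X = k)
  (q : nat) (Rm : 'M[R]_(q, k)) (r : 'cV[R]_q) (Hq : (1 <= q)%N) (HR : \rank Rm = q)
  (mu0 : 'cV[R]_n) (Hmu0 : exists beta : 'cV[R]_k, Rm *m beta = r /\ mu0 = X *m beta) :
  (* 1. *)
  (isKV M ->
     forall y : 'cV[R]_n, ~ Nstar p kappa M X Rm y ->
       differentiable (Tstat p kappa M X Rm r) (mu0 + y))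
  /\
  (* 2. *)
  (~ isKV M ->
     forall Delta : set R, closed Delta -> ~` Delta !=set0 ->
     (forall x, ~ Delta x -> derivable kappa x 1 /\ {for x, continuous kappa^`()}) ->
     forall y : 'cV[R]_n, ~ Nstar p kappa M X Rm y ->
       ((exists m : R, [/\ M X y = Some m, m != 0 &
            forall i : nat, (1 <= i <= n - p - 1)%N ->
              ~ Delta (i%:R / m) /\ ~ Delta (- (i%:R / m))])
        \/ (M X y = Some 0 /\ compact (closure [set x : R | kappa x != 0]))) ->
       differentiable (Tstat p kappa M X Rm r) (mu0 + y))
  /\
  (* 3. *)
  (~ isKV M ->
     forall delta : R, 0 <= delta ->
     exists g : pexpr R ('I_n + ('I_n * 'I_k)),
       forall X' : 'M[R]_(n, k), \rank X' = k ->
       forall (q' : nat) (R' : 'M[R]_(q', k)), (1 <= q')%N -> \rank R' = q' ->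
       forall y : 'cV[R]_n,
         (~ Nstar p kappa M X' R' y /\ M X' y = Some delta) <->
         (~ Nstar p kappa M X' R' y /\ peval (yX_env y X') g = 0)).
Proof.
have [beta [_ Emu]] := Hmu0; rewrite Emu.
have HXX := XtX_unit HX.
split; [|split].
- move=> [c [c0 Hc]] y HNy.
  have HNz : ~ Nstar p kappa M X Rm (X *m beta + y).
    by move/(Nstar_shift Rm beta y HA HXX).
  apply: (@T_diff R n k p q kappa M X Rm r _ HX HNz (fun _ => c)).
    by near=> t; apply: Hc.
  by move=> j; apply: differentiable_cst.
- move=> nKV Delta _ _ Hkap y HNy Hcase.
  have HNz : ~ Nstar p kappa M X Rm (X *m beta + y).
    by move/(Nstar_shift Rm beta y HA HXX).
  set z := X *m beta + y.
  have [c [c' [s [c0 c'0 Hs HsM]]]] := bw_near_diff HA nKV HX HNz.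
  have [Mz sz0] := nbhs_singleton HsM.
  have MzY : M X z = M X y := M_shift beta y HA HXX.
  apply: (@T_diff R n k p q kappa M X Rm r _ HX HNz (fun t => c * powR (s t) c')).
    by apply: filterS HsM => t [].
  case: Hcase => [[m [Em mn0 HD]]|[Em Hcomp]].
    have Em' : c * powR (s z) c' = m by move: Em; rewrite -MzY Mz => -[].
    have Hs0 : 0 < s z.
      rewrite lt_def sz0 andbT; apply: contraNneq mn0 => s0.
      by rewrite -Em' s0 powR0 ?mulr0 // gt_eqF.
    apply: (wt_diff_a Hkap c0 c'0 Hs Hs0) => i Hi.
    by rewrite Em'; apply: HD; rewrite subn1.
  have Em' : c * powR (s z) c' = 0 by move: Em; rewrite -MzY Mz => -[].
  have Hsz : s z = 0.
    by move: Em'; move/eqP; rewrite mulf_eq0 gt_eqF //= => /eqP /powR_eq0_eq0.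
  have [B [B0 HB]] := supp_bound Hcomp.
  have Hk0 : kappa 0 = 1 by case: HA => [[_ [_ [H _]]] _ _].
  move=> j; apply: (wt_diff_b Hk0 B0 HB c0 c'0 Hs Hsz).
  by apply: filterS HsM => t [].
- move=> nKV delta Hd; exact: part3.
Unshelve. all: by end_near.
Qed.
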